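(* Let $A$ be an essential Banach algebra and $X$ a Banach $A$-bimodule. Then for all integers $n\geq 3$, $Mul_{n-1}(A,X)=Mul_{n}(A,X)$. In particular $Mul_{2}(A,X)=Mul_{n}(A,X)$ for all $n\geq 2$.
   Context: A Banach algebra $A$ is essential if $\overline{A^2}=A$, where $A^2=\mathrm{span}\{ab:a,b\in A\}$. For $n\ge 2$, a bounded linear map $T:A\to X$ is an $n$-multiplier if $T(a_1\cdots a_n)=a_1\cdot T(a_2\cdots a_n)=T(a_1\cdots a_{n-1})\cdot a_n$ for all $a_i\in A$; $Mul_n(A,X)$ is the set of all $n$-multipliers from $A$ into $X$. *)

(* Defs.v *)
From Stdlib Require Import Reals.
Open Scope R_scope.
Set Implicit Arguments.

Record BanachSpace := MkBanachSpace {
  bs_car :> Type;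
  bs_zero : bs_car;
  bs_add : bs_car -> bs_car -> bs_car;
  bs_opp : bs_car -> bs_car;
  bs_scal : R -> bs_car -> bs_car;
  bs_norm : bs_car -> R;
  bs_add_assoc : forall x y z, bs_add x (bs_add y z) = bs_add (bs_add x y) z;
  bs_add_comm : forall x y, bs_add x y = bs_add y x;
  bs_add_0 : forall x, bs_add x bs_zero = x;
  bs_add_opp : forall x, bs_add x (bs_opp x) = bs_zero;
  bs_scal_assoc : forall a b x, bs_scal a (bs_scal b x) = bs_scal (a * b) x;
  bs_scal_1 : forall x, bs_scal 1 x = x;
  bs_scal_distr_l : forall a x y, bs_scal a (bs_add x y) = bs_add (bs_scal a x) (bs_scal a y);
  bs_scal_distr_r : forall a b x, bs_scal (a + b) x = bs_add (bs_scal a x) (bs_scal b x);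
  bs_norm_eq0 : forall x, bs_norm x = 0 -> x = bs_zero;
  bs_norm_triangle : forall x y, bs_norm (bs_add x y) <= bs_norm x + bs_norm y;
  bs_norm_scal : forall a x, bs_norm (bs_scal a x) = Rabs a * bs_norm x;
  bs_complete : forall u : nat -> bs_car,
    (forall eps, 0 < eps -> exists N, forall m n, (N <= m)%nat -> (N <= n)%nat ->
        bs_norm (bs_add (u m) (bs_opp (u n))) < eps) ->
    exists l, forall eps, 0 < eps -> exists N, forall n, (N <= n)%nat ->
        bs_norm (bs_add (u n) (bs_opp l)) < eps
}.

Arguments bs_zero {b} : rename.

Record BanachAlgebra := MkBanachAlgebra {
  ba_space :> BanachSpace;
  ba_mul : ba_space -> ba_space -> ba_space;
  ba_mul_assoc : forall a b c, ba_mul a (ba_mul b c) = ba_mul (ba_mul a b) c;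
  ba_mul_add_l : forall a b c, ba_mul (bs_add _ a b) c = bs_add _ (ba_mul a c) (ba_mul b c);
  ba_mul_add_r : forall a b c, ba_mul a (bs_add _ b c) = bs_add _ (ba_mul a b) (ba_mul a c);
  ba_mul_scal_l : forall t a b, ba_mul (bs_scal _ t a) b = bs_scal _ t (ba_mul a b);
  ba_mul_scal_r : forall t a b, ba_mul a (bs_scal _ t b) = bs_scal _ t (ba_mul a b);
  ba_norm_mul : forall a b, bs_norm _ (ba_mul a b) <= bs_norm _ a * bs_norm _ b
}.

Record BanachBimodule (A : BanachAlgebra) := MkBanachBimodule {
  bm_space :> BanachSpace;
  bm_lact : A -> bm_space -> bm_space;
  bm_ract : bm_space -> A -> bm_space;
  bm_lact_add_l : forall a b x, bm_lact (bs_add _ a b) x = bs_add _ (bm_lact a x) (bm_lact b x);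
  bm_lact_add_r : forall a x y, bm_lact a (bs_add _ x y) = bs_add _ (bm_lact a x) (bm_lact a y);
  bm_lact_scal_l : forall t a x, bm_lact (bs_scal _ t a) x = bs_scal _ t (bm_lact a x);
  bm_lact_scal_r : forall t a x, bm_lact a (bs_scal _ t x) = bs_scal _ t (bm_lact a x);
  bm_ract_add_l : forall x y a, bm_ract (bs_add _ x y) a = bs_add _ (bm_ract x a) (bm_ract y a);
  bm_ract_add_r : forall x a b, bm_ract x (bs_add _ a b) = bs_add _ (bm_ract x a) (bm_ract x b);
  bm_ract_scal_l : forall t x a, bm_ract (bs_scal _ t x) a = bs_scal _ t (bm_ract x a);
  bm_ract_scal_r : forall t x a, bm_ract x (bs_scal _ t a) = bs_scal _ t (bm_ract x a);
  bm_lact_assoc : forall a b x, bm_lact a (bm_lact b x) = bm_lact (ba_mul A a b) x;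
  bm_ract_assoc : forall x a b, bm_ract (bm_ract x a) b = bm_ract x (ba_mul A a b);
  bm_lr_assoc : forall a x b, bm_ract (bm_lact a x) b = bm_lact a (bm_ract x b);
  bm_bounded : exists C, 0 <= C /\ forall a x,
    bs_norm _ (bm_lact a x) <= C * bs_norm _ a * bs_norm _ x /\
    bs_norm _ (bm_ract x a) <= C * bs_norm _ a * bs_norm _ x
}.

Inductive in_A2 (A : BanachAlgebra) : A -> Prop :=
| A2_zero : in_A2 A bs_zero
| A2_prod : forall a b, in_A2 A (ba_mul A a b)
| A2_add : forall x y, in_A2 A x -> in_A2 A y -> in_A2 A (bs_add _ x y)
| A2_scal : forall t x, in_A2 A x -> in_A2 A (bs_scal _ t x).

Definition in_closure (E : BanachSpace) (S : E -> Prop) (x : E) : Prop :=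
  forall eps, 0 < eps -> exists y, S y /\ bs_norm _ (bs_add _ x (bs_opp _ y)) < eps.

Definition essential (A : BanachAlgebra) : Prop :=
  forall a : A, @in_closure (ba_space A) (in_A2 A) a.

Definition bounded_linear (E F : BanachSpace) (T : E -> F) : Prop :=
  (forall x y, T (bs_add _ x y) = bs_add _ (T x) (T y)) /\
  (forall t x, T (bs_scal _ t x) = bs_scal _ t (T x)) /\
  (exists M, forall x, bs_norm _ (T x) <= M * bs_norm _ x).

(* prodS a i k = a_i a_{i+1} ... a_{i+k}  (k+1 factors) *)
Fixpoint prodS {A : BanachAlgebra} (a : nat -> A) (i k : nat) : A :=
  match k with
  | O => a i
  | S k' => ba_mul A (a i) (prodS a (S i) k')
  end.

(* T is an n-multiplier (n >= 2): with factors a_0, ..., a_{n-1},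
   T(a_0...a_{n-1}) = a_0 . T(a_1...a_{n-1}) = T(a_0...a_{n-2}) . a_{n-1}. *)
Definition is_n_multiplier (A : BanachAlgebra) (X : BanachBimodule A) (n : nat)
    (T : A -> X) : Prop :=
  @bounded_linear (ba_space A) (bm_space X) T /\
  forall a : nat -> A,
    T (prodS a 0 (n - 1)) = bm_lact X (a 0%nat) (T (prodS a 1 (n - 2))) /\
    T (prodS a 0 (n - 1)) = bm_ract X (T (prodS a 0 (n - 2))) (a (n - 1)%nat).

Definition Mul (A : BanachAlgebra) (X : BanachBimodule A) (n : nat) : (A -> X) -> Prop :=
  fun T => is_n_multiplier X n T.

(* Main.v *)
Require Import Defs.
From Stdlib Require Import Reals.
From Stdlib Require Import Lra Lia FunctionalExtensionality.
Set Implicit Arguments.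

Lemma Rabs_m1' : Rabs (-1)%R = 1%R.
Proof. rewrite Rabs_left; lra. Qed.

Section VS.
Variable E : BanachSpace.

Lemma cancel_self (u : E) : bs_add E u u = u -> u = bs_zero.
Proof.
  intro H. transitivity (bs_add E (bs_add E u u) (bs_opp E u)).
  - rewrite <- bs_add_assoc, bs_add_opp, bs_add_0. reflexivity.
  - rewrite H. apply bs_add_opp.
Qed.

Lemma scal0 (x : E) : bs_scal E 0%R x = bs_zero.
Proof. apply cancel_self. rewrite <- bs_scal_distr_r, Rplus_0_r. reflexivity. Qed.

Lemma scal_zero t : bs_scal E t (@bs_zero E) = bs_zero.
Proof.
  transitivity (bs_scal E t (bs_scal E 0%R (@bs_zero E))).
  - rewrite scal0. reflexivity.
  - rewrite bs_scal_assoc, Rmult_0_r. apply scal0.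
Qed.

Lemma add_scalm1 (x : E) : bs_add E x (bs_scal E (-1)%R x) = bs_zero.
Proof.
  transitivity (bs_add E (bs_scal E 1%R x) (bs_scal E (-1)%R x)).
  - rewrite bs_scal_1. reflexivity.
  - rewrite <- bs_scal_distr_r. replace (1 + -1)%R with 0%R by ring. apply scal0.
Qed.

Lemma norm_zero : bs_norm E bs_zero = 0%R.
Proof.
  transitivity (bs_norm E (bs_scal E 0%R (@bs_zero E))).
  - rewrite scal0. reflexivity.
  - rewrite bs_norm_scal, Rabs_R0. ring.
Qed.

Lemma norm_nonneg (x : E) : (0 <= bs_norm E x)%R.
Proof.
  pose proof (bs_norm_triangle E x (bs_scal E (-1)%R x)) as H.
  rewrite add_scalm1, norm_zero, bs_norm_scal, Rabs_m1' in H. lra.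
Qed.

Lemma add_swap4 (a b c d : E) :
  bs_add E (bs_add E a b) (bs_add E c d) = bs_add E (bs_add E a c) (bs_add E b d).
Proof.
  rewrite !bs_add_assoc. f_equal.
  rewrite <- !bs_add_assoc. f_equal. apply bs_add_comm.
Qed.

End VS.

Lemma bl_zero (E F : BanachSpace) (T : E -> F) :
  @bounded_linear E F T -> T bs_zero = bs_zero.
Proof.
  intros [_ [Hs _]].
  transitivity (T (bs_scal E 0%R bs_zero)).
  - rewrite scal0. reflexivity.
  - rewrite Hs. apply scal0.
Qed.

Lemma bl_bound (E F : BanachSpace) (T : E -> F) :
  @bounded_linear E F T -> exists M, (0 <= M)%R /\ forall x, (bs_norm F (T x) <= M * bs_norm E x)%R.
Proof.
  intros [_ [_ [M HM]]]. exists (Rabs M). split; [apply Rabs_pos|].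
  intro x. eapply Rle_trans; [apply HM|]. apply Rmult_le_compat_r.
  apply norm_nonneg. apply Rle_abs.
Qed.

Lemma bl_ext (E F : BanachSpace) (f g : E -> F) :
  @bounded_linear E F f -> (forall x, f x = g x) -> @bounded_linear E F g.
Proof.
  intros H Heq. assert (f = g) by (apply functional_extensionality; auto). subst; auto.
Qed.

Lemma bl_comp (E F G : BanachSpace) (f : E -> F) (g : F -> G) :
  @bounded_linear E F f -> @bounded_linear F G g -> @bounded_linear E G (fun x => g (f x)).
Proof.
  intros Hf Hg. pose proof (bl_bound Hf) as [Mf [Mf0 HMf]].
  pose proof (bl_bound Hg) as [Mg [Mg0 HMg]].
  destruct Hf as [fa [fs _]]. destruct Hg as [ga [gs _]].
  split; [intros; rewrite fa, ga; auto|split; [intros; rewrite fs, gs; auto|]].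
  exists (Mg * Mf)%R. intro x. eapply Rle_trans; [apply HMg|].
  rewrite Rmult_assoc. apply Rmult_le_compat_l; auto.
Qed.

Lemma bl_id (E : BanachSpace) : @bounded_linear E E (fun x : E => x).
Proof. split; [auto|split; [auto|]]. exists 1%R. intro; lra. Qed.

Section Alg.
Variable A : BanachAlgebra.

Lemma bl_mulr (c : A) : @bounded_linear A A (fun x => ba_mul A x c).
Proof.
  split; [intros; apply ba_mul_add_l|split; [intros; apply ba_mul_scal_l|]].
  exists (bs_norm A c). intro x. rewrite Rmult_comm. apply ba_norm_mul.
Qed.

Lemma bl_mull (c : A) : @bounded_linear A A (fun x => ba_mul A c x).
Proof.
  split; [intros; apply ba_mul_add_r|split; [intros; apply ba_mul_scal_r|]].
  exists (bs_norm A c). intro x. apply ba_norm_mul.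
Qed.

Variable X : BanachBimodule A.

Lemma bl_lact (c : A) : @bounded_linear X X (fun y => bm_lact X c y).
Proof.
  split; [intros; apply bm_lact_add_r|split; [intros; apply bm_lact_scal_r|]].
  destruct (bm_bounded X) as [C [C0 HC]].
  exists (C * bs_norm A c)%R. intro y. apply (HC c y).
Qed.

Lemma bl_ract (c : A) : @bounded_linear X X (fun y => bm_ract X y c).
Proof.
  split; [intros; apply bm_ract_add_l|split; [intros; apply bm_ract_scal_l|]].
  destruct (bm_bounded X) as [C [C0 HC]].
  exists (C * bs_norm A c)%R. intro y. apply (HC c y).
Qed.

Lemma eq_on_closure (Y : BanachSpace) (g h : A -> Y) :
  essential A -> @bounded_linear A Y g -> @bounded_linear A Y h ->
  (forall b c, g (ba_mul A b c) = h (ba_mul A b c)) -> forall x, g x = h x.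
Proof.
  intros Hess Hg Hh Hbc x.
  pose proof (bl_bound Hg) as [Mg [Mg0 HMg]].
  pose proof (bl_bound Hh) as [Mh [Mh0 HMh]].
  destruct Hg as [ga [gs _]]. destruct Hh as [ha [hs _]].
  set (d := fun z => bs_add Y (g z) (bs_scal Y (-1)%R (h z))).
  assert (dadd : forall u v, d (bs_add A u v) = bs_add Y (d u) (d v)).
  { intros u v. unfold d. rewrite ga, ha, bs_scal_distr_l. apply add_swap4. }
  assert (dscal : forall t u, d (bs_scal A t u) = bs_scal Y t (d u)).
  { intros t u. unfold d. rewrite gs, hs, bs_scal_distr_l, !bs_scal_assoc.
    rewrite Rmult_comm. reflexivity. }
  assert (d0 : forall y, in_A2 A y -> d y = bs_zero).
  { intros y Hy. induction Hy.
    - unfold d. rewrite <- (scal0 A bs_zero), gs, hs, !scal0, scal_zero.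
      apply bs_add_0.
    - unfold d. rewrite Hbc. apply add_scalm1.
    - rewrite dadd, IHHy1, IHHy2. apply bs_add_0.
    - rewrite dscal, IHHy. apply scal_zero. }
  assert (dbound : forall z, (bs_norm Y (d z) <= (Mg + Mh + 1) * bs_norm A z)%R).
  { intro z. unfold d. eapply Rle_trans; [apply bs_norm_triangle|].
    rewrite bs_norm_scal, Rabs_m1'.
    pose proof (HMg z). pose proof (HMh z). pose proof (norm_nonneg A z). nra. }
  assert (dx : d x = bs_zero).
  { apply bs_norm_eq0. destruct (Req_dec (bs_norm Y (d x)) 0) as [E0|Ene]; auto.
    exfalso. pose proof (norm_nonneg Y (d x)) as Hn.
    set (nd := bs_norm Y (d x)) in *.
    destruct (Hess x (nd / (Mg + Mh + 1))%R) as [y [Hy Hxy]].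
    { apply Rdiv_lt_0_compat; lra. }
    assert (Hsplit : x = bs_add A (bs_add A x (bs_opp A y)) y).
    { rewrite <- bs_add_assoc, (bs_add_comm A (bs_opp A y) y), bs_add_opp, bs_add_0.
      reflexivity. }
    assert (d x = d (bs_add A x (bs_opp A y))) as Hdx.
    { rewrite Hsplit at 1. rewrite dadd, (d0 y Hy), bs_add_0. reflexivity. }
    pose proof (dbound (bs_add A x (bs_opp A y))) as Hb. rewrite <- Hdx in Hb.
    fold nd in Hb.
    assert ((Mg + Mh + 1) * bs_norm A (bs_add A x (bs_opp A y)) <
            (Mg + Mh + 1) * (nd / (Mg + Mh + 1)))%R.
    { apply Rmult_lt_compat_l; lra. }
    field_simplify in H; lra. }
  unfold d in dx.
  transitivity (bs_add Y (g x) (bs_add Y (bs_scal Y (-1)%R (h x)) (h x))).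
  - rewrite (bs_add_comm Y (bs_scal Y _ _)), add_scalm1, bs_add_0. reflexivity.
  - rewrite bs_add_assoc, dx, bs_add_comm. apply bs_add_0.
Qed.

Definition cons (x : A) (r : nat -> A) : nat -> A :=
  fun j => match j with O => x | S j' => r j' end.

Lemma prodS_shift (a : nat -> A) i m : prodS a (S i) m = prodS (fun j => a (S j)) i m.
Proof. revert i; induction m; intro i; simpl; auto. rewrite IHm. reflexivity. Qed.

Lemma prodS_cons1 x r m : prodS (cons x r) 1 m = prodS r 0 m.
Proof. rewrite prodS_shift. reflexivity. Qed.

Lemma prodS_ext (a b : nat -> A) i m :
  (forall j, (i <= j <= i + m)%nat -> a j = b j) -> prodS a i m = prodS b i m.
Proof.
  revert i; induction m; intros i H; simpl.
  - apply H; lia.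
  - rewrite (H i) by lia. rewrite (IHm (S i)); auto. intros; apply H; lia.
Qed.

Lemma prodS_last (a : nat -> A) i m :
  prodS a i (S m) = ba_mul A (prodS a i m) (a (i + S m)%nat).
Proof.
  revert i; induction m; intro i.
  - simpl. rewrite Nat.add_1_r. reflexivity.
  - change (prodS a i (S (S m))) with (ba_mul A (a i) (prodS a (S i) (S m))).
    rewrite IHm. rewrite ba_mul_assoc. simpl.
    replace (S (i + S m)) with (i + S (S m))%nat by lia. reflexivity.
Qed.

Lemma prodS_split_first b c r m :
  prodS (cons (ba_mul A b c) r) 0 m = prodS (cons b (cons c r)) 0 (S m).
Proof.
  destruct m.
  - reflexivity.
  - change (ba_mul A (ba_mul A b c) (prodS (cons (ba_mul A b c) r) 1 m) =
            ba_mul A b (ba_mul A c (prodS (cons b (cons c r)) 2 m))).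
    rewrite prodS_cons1, ba_mul_assoc. f_equal.
    rewrite !prodS_shift. reflexivity.
Qed.

Lemma bl_prodS_cons r m : @bounded_linear A A (fun x => prodS (cons x r) 0 m).
Proof.
  destruct m.
  - apply bl_id.
  - eapply bl_ext; [apply (bl_mulr (prodS r 0 m))|].
    intro x. simpl. rewrite prodS_cons1. reflexivity.
Qed.

Lemma cons_eta (a : nat -> A) : a = cons (a 0%nat) (fun j => a (S j)).
Proof. apply functional_extensionality. intros [|j]; reflexivity. Qed.

Lemma mul_unfold (p : nat) (T : A -> X) :
  is_n_multiplier X (S (S p)) T <->
  @bounded_linear A X T /\ forall a : nat -> A,
    T (prodS a 0 (S p)) = bm_lact X (a 0%nat) (T (prodS a 1 p)) /\
    T (prodS a 0 (S p)) = bm_ract X (T (prodS a 0 p)) (a (S p)).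
Proof.
  unfold is_n_multiplier.
  replace (S (S p) - 1)%nat with (S p) by lia.
  replace (S (S p) - 2)%nat with p by lia. tauto.
Qed.

Lemma fwd (p : nat) (T : A -> X) :
  is_n_multiplier X (S (S p)) T -> is_n_multiplier X (S (S (S p))) T.
Proof.
  rewrite !mul_unfold. intros [Hbl H]. split; auto. intro a. split.
  - set (b := cons (ba_mul A (a 0%nat) (a 1%nat)) (fun j => a (S (S j)))).
    assert (E1 : prodS a 0 (S (S p)) = prodS b 0 (S p)).
    { change (ba_mul A (a 0%nat) (ba_mul A (a 1%nat) (prodS a 2 p)) =
              ba_mul A (ba_mul A (a 0%nat) (a 1%nat)) (prodS b 1 p)).
      rewrite ba_mul_assoc. unfold b. rewrite prodS_cons1, !prodS_shift. reflexivity. }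
    rewrite E1. destruct (H b) as [Hl _]. rewrite Hl. unfold b at 1.
    simpl cons. rewrite <- bm_lact_assoc. f_equal.
    unfold b. rewrite prodS_cons1.
    destruct (H (fun j => a (S j))) as [Hl2 _].
    rewrite prodS_shift. rewrite Hl2. rewrite prodS_shift. reflexivity.
  - set (b := fun j => if Nat.eqb j (S p) then ba_mul A (a (S p)) (a (S (S p))) else a j).
    assert (Eb : prodS b 0 p = prodS a 0 p).
    { apply prodS_ext. intros j Hj. unfold b.
      destruct (Nat.eqb_spec j (S p)); [lia|reflexivity]. }
    assert (E1 : prodS a 0 (S (S p)) = prodS b 0 (S p)).
    { rewrite !prodS_last, Eb. simpl. unfold b. rewrite Nat.eqb_refl.
      rewrite ba_mul_assoc. reflexivity. }
    rewrite E1. destruct (H b) as [_ Hr]. rewrite Hr, Eb.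
    unfold b. rewrite Nat.eqb_refl. rewrite <- bm_ract_assoc.
    destruct (H a) as [_ Hr2]. rewrite Hr2. reflexivity.
Qed.

Lemma bwd (p : nat) (T : A -> X) : essential A ->
  is_n_multiplier X (S (S (S p))) T -> is_n_multiplier X (S (S p)) T.
Proof.
  intro Hess. rewrite !mul_unfold. intros [Hbl H]. split; auto. intro a. split.
  - assert (L : forall a0 r x,
      T (ba_mul A a0 (prodS (cons x r) 0 p)) = bm_lact X a0 (T (prodS (cons x r) 0 p))).
    { intros a0 r. apply (eq_on_closure (Y := X) (g := fun x => T (ba_mul A a0 (prodS (cons x r) 0 p)))
        (h := fun x => bm_lact X a0 (T (prodS (cons x r) 0 p))) Hess).
      - apply (bl_comp (g := fun y => T (ba_mul A a0 y)) (bl_prodS_cons r p)).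
        apply (bl_comp (g := T) (bl_mull a0)). exact Hbl.
      - apply (bl_comp (g := fun y => bm_lact X a0 (T y)) (bl_prodS_cons r p)).
        apply (bl_comp (g := fun z => bm_lact X a0 z) Hbl). apply bl_lact.
      - intros b c. rewrite prodS_split_first.
        destruct (H (cons a0 (cons b (cons c r)))) as [Hl _].
        change (prodS (cons a0 (cons b (cons c r))) 0 (S (S p))) with
          (ba_mul A a0 (prodS (cons a0 (cons b (cons c r))) 1 (S p))) in Hl.
        rewrite !prodS_cons1 in Hl. exact Hl. }
    change (prodS a 0 (S p)) with (ba_mul A (a 0%nat) (prodS a 1 p)).
    rewrite prodS_shift. rewrite (cons_eta (fun j => a (S j))). apply L.
  - assert (R : forall r x,
      T (prodS (cons x r) 0 (S p)) = bm_ract X (T (prodS (cons x r) 0 p)) (r p)).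
    { intros r. apply (eq_on_closure (Y := X) (g := fun x => T (prodS (cons x r) 0 (S p)))
        (h := fun x => bm_ract X (T (prodS (cons x r) 0 p)) (r p)) Hess).
      - apply (bl_comp (g := T) (bl_prodS_cons r (S p))). exact Hbl.
      - apply (bl_comp (g := fun y => bm_ract X (T y) (r p)) (bl_prodS_cons r p)).
        apply (bl_comp (g := fun z => bm_ract X z (r p)) Hbl). apply bl_ract.
      - intros b c. rewrite !prodS_split_first.
        destruct (H (cons b (cons c r))) as [_ Hr].
        exact Hr. }
    rewrite (cons_eta a). apply R.
Qed.

End Alg.

Unset Implicit Arguments.

Theorem theorem2p4 (A : BanachAlgebra) (X : BanachBimodule A) :
  essential A ->
  (forall n : nat, (3 <= n)%nat -> forall T : A -> X, Mul X (n - 1) T <-> Mul X n T) /\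
  (forall n : nat, (2 <= n)%nat -> forall T : A -> X, Mul X 2 T <-> Mul X n T).
Proof.
  intro Hess.
  assert (P1 : forall n : nat, (3 <= n)%nat -> forall T : A -> X, Mul X (n - 1) T <-> Mul X n T).
  { intros n Hn T. destruct n as [|[|[|p]]]; try lia.
    replace (S (S (S p)) - 1)%nat with (S (S p)) by lia. unfold Mul.
    split; [apply fwd | apply bwd; auto]. }
  split; auto.
  intros n Hn T. induction Hn.
  - tauto.
  - rewrite IHHn. assert (HP := P1 (S m) ltac:(lia) T).
    replace (S m - 1)%nat with m in HP by lia. exact HP.
Qed.
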